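(* Let $h_1,h_2,g_1,g_2>0$ be real numbers. For $\Delta_1,\Delta_2>0$ and $\Omega\subseteq\{1,2\}$ define (all logarithms base $2$, $[x]^+=\max\{x,0\}$) \begin{align*} R(\emptyset;\Delta_1,\Delta_2)&=\Big[\log\Big(1+\tfrac{h_1^2}{1+\Delta_1}+\tfrac{h_2^2}{1+\Delta_2}\Big)\Big]^+,\\ R(\{1\};\Delta_1,\Delta_2)&=\Big[\log(1+g_1^2)+\log\Big(1+\tfrac{h_2^2}{1+\Delta_2}\Big)-\log\tfrac{1+\Delta_1}{\Delta_1}\Big]^+,\\ R(\{2\};\Delta_1,\Delta_2)&=\Big[\log(1+g_2^2)+\log\Big(1+\tfrac{h_1^2}{1+\Delta_1}\Big)-\log\tfrac{1+\Delta_2}{\Delta_2}\Big]^+,\\ R(\{1,2\};\Delta_1,\Delta_2)&=\Big[\log(1+g_1^2+g_2^2)-\log\tfrac{1+\Delta_1}{\Delta_1}-\log\tfrac{1+\Delta_2}{\Delta_2}\Big]^+. \end{align*} Let $$\delta_1:=\frac{(1+g_1^2+g_2^2)(1+h_1^2+h_2^2)+(1+g_2^2)h_1^2h_2^2}{g_2^2(1+g_1^2+g_2^2)(1+h_1^2)},\qquad \delta_2:=\frac{(1+g_1^2)(1+h_2^2)}{g_2^2},$$ and $\mathcal I_1=(0,\delta_1)$, $\mathcal I_2=[\delta_1,\delta_2)$, $\mathcal I_3=[\delta_2,\infty)$. Then $0<\delta_1<\delta_2$ (so the three intervals are nonempty), and for fixed $\Delta_2>0$, the optimizing $\Delta_1^*$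 of the max-min problem $\max_{\Delta_1>0}\min_{\Omega\subseteq\{1,2\}}R(\Omega;\Delta_1,\Delta_2)$ and the minimizing cut $\Omega^*$ at this optimum are: \begin{itemize} \item if $\Delta_2\in\mathcal I_1$: $\Delta_1^*=\frac{(1+g_2^2)(1+h_1^2)}{g_1^2}$, and $\Omega^*=\{1,2\}$ or $\{2\}$; \item if $\Delta_2\in\mathcal I_2$: $\Delta_1^*=\frac{(1+h_1^2)\Delta_2+(1+h_1^2+h_2^2)}{(g_1^2+g_2^2)\Delta_2-(1+h_2^2)}$, and $\Omega^*=\{1,2\}$ or $\emptyset$; \item if $\Delta_2\in\mathcal I_3$: $\Delta_1^*=\frac{(1+h_1^2)\Delta_2+(1+h_1^2+h_2^2)}{g_1^2(\Delta_2+(1+h_2^2))}$, and $\Omega^*=\{1\}$ or $\emptyset$. \end{itemize}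
   Context: This concerns the full-duplex two-relay Gaussian diamond network: source $S$, relays $A_1,A_2$, destination $D$, with channel magnitudes $h_i$ ($S\to A_i$) and $g_i$ ($A_i\to D$). Relay $i$ uses a Gaussian vector quantizer with distortion $\Delta_i$ (quantized signal $\hat Y_i=Y_i+\hat Z_i$, $\hat Z_i\sim\mathcal{CN}(0,\Delta_i)$), and $R(\Omega;\Delta_1,\Delta_2)$ is the resulting quantize-map-and-forward rate expression for the cut $\Omega$ (the QMF achievable rate is $\min_\Omega R(\Omega;\Delta_1,\Delta_2)$). *)

(* Defs.v *)
From Stdlib Require Import Reals.
Open Scope R_scope.

Definition log2 (x : R) : R := ln x / ln 2.
Definition pos (x : R) : R := Rmax x 0.

Inductive cut : Type := Cut_empty | Cut_1 | Cut_2 | Cut_12.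

Definition rate (h1 h2 g1 g2 : R) (Om : cut) (D1 D2 : R) : R :=
  match Om with
  | Cut_empty => pos (log2 (1 + h1^2 / (1 + D1) + h2^2 / (1 + D2)))
  | Cut_1 => pos (log2 (1 + g1^2) + log2 (1 + h2^2 / (1 + D2)) - log2 ((1 + D1) / D1))
  | Cut_2 => pos (log2 (1 + g2^2) + log2 (1 + h1^2 / (1 + D1)) - log2 ((1 + D2) / D2))
  | Cut_12 => pos (log2 (1 + g1^2 + g2^2) - log2 ((1 + D1) / D1) - log2 ((1 + D2) / D2))
  end.

Definition minrate (h1 h2 g1 g2 D1 D2 : R) : R :=
  Rmin (Rmin (rate h1 h2 g1 g2 Cut_empty D1 D2) (rate h1 h2 g1 g2 Cut_1 D1 D2))
       (Rmin (rate h1 h2 g1 g2 Cut_2 D1 D2) (rate h1 h2 g1 g2 Cut_12 D1 D2)).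

Definition is_opt (h1 h2 g1 g2 D2 D1 : R) : Prop :=
  0 < D1 /\ forall D, 0 < D -> minrate h1 h2 g1 g2 D D2 <= minrate h1 h2 g1 g2 D1 D2.

Definition min_cut (h1 h2 g1 g2 D1 D2 : R) (Om : cut) : Prop :=
  rate h1 h2 g1 g2 Om D1 D2 = minrate h1 h2 g1 g2 D1 D2.

Definition delta1 (h1 h2 g1 g2 : R) : R :=
  ((1 + g1^2 + g2^2) * (1 + h1^2 + h2^2) + (1 + g2^2) * h1^2 * h2^2)
  / (g2^2 * (1 + g1^2 + g2^2) * (1 + h1^2)).
Definition delta2 (h1 h2 g1 g2 : R) : R := (1 + g1^2) * (1 + h2^2) / g2^2.

(* Main.v *)
Require Import Defs.
From Stdlib Require Import Reals Lra Psatz.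
Open Scope R_scope.

Lemma ln2_pos : 0 < ln 2.
Proof. pose proof ln_lt_2; lra. Qed.

Lemma log2_le u v : 0 < u -> u <= v -> log2 u <= log2 v.
Proof.
  intros Hu Huv. unfold log2. pose proof ln2_pos as L2.
  apply Rmult_le_compat_r. left; apply Rinv_0_lt_compat; lra.
  destruct Huv as [Hl|He]. left; apply ln_increasing; lra. rewrite He; lra.
Qed.

Lemma pos_le u v : u <= v -> Defs.pos u <= Defs.pos v.
Proof. intros; unfold Defs.pos; apply Rle_max_compat_r; auto. Qed.

Lemma frac_le P Q R0 S : 0 < Q -> 0 < S -> P * S <= R0 * Q -> P / Q <= R0 / S.
Proof.
  intros HQ HS H.
  replace (P/Q) with ((P*S) * / (Q*S)) by (field; lra).
  replace (R0/S) with ((R0*Q) * / (Q*S)) by (field; lra).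
  apply Rmult_le_compat_r. left; apply Rinv_0_lt_compat; nra. auto.
Qed.

Definition NN0 a b x y := (1+x+a)*(1+y) + b*(1+x).
Definition NN1 b c x y := (1+c)*(1+y+b)*x.
Definition NN2 a d x y := (1+d)*(1+x+a)*y.
Definition NN12 c d x y := (1+c+d)*x*y.
Definition G N x y := Defs.pos (log2 (N / ((1+x)*(1+y)))).

Lemma log2_mult u v : 0 < u -> 0 < v -> log2 (u*v) = log2 u + log2 v.
Proof. intros; unfold log2; rewrite ln_mult by auto; field; pose proof ln2_pos; lra. Qed.
Lemma log2_div u v : 0 < u -> 0 < v -> log2 (u/v) = log2 u - log2 v.
Proof. intros; unfold log2, Rdiv; rewrite ln_mult, ln_Rinv by (auto; apply Rinv_0_lt_compat; auto).
  field; pose proof ln2_pos; lra. Qed.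

Section S.
Variables h1 h2 g1 g2 x y : R.
Hypotheses (hx : 0 < x) (hy : 0 < y).

Lemma rate0 : rate h1 h2 g1 g2 Cut_empty x y = G (NN0 (h1^2) (h2^2) x y) x y.
Proof.
  unfold rate. unfold G, NN0. f_equal. f_equal. field. lra.
Qed.

Lemma rate1 : rate h1 h2 g1 g2 Cut_1 x y = G (NN1 (h2^2) (g1^2) x y) x y.
Proof.
  unfold rate. unfold G, NN1. f_equal.
  pose proof (pow2_ge_0 h2); pose proof (pow2_ge_0 g1).
  replace ((1 + g1 ^ 2) * (1 + y + h2 ^ 2) * x / ((1 + x) * (1 + y)))
   with ((1 + g1^2) * (1 + h2^2/(1+y)) / ((1+x)/x)) by (field; lra).
  rewrite (log2_div ((1 + g1^2) * (1 + h2^2/(1+y)))), log2_mult; try lra.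
  all: try apply Rdiv_lt_0_compat; try lra.
  all: try apply Rmult_lt_0_compat; try lra.
  assert (0 <= h2^2/(1+y)) by (unfold Rdiv; apply Rmult_le_pos; [lra | left; apply Rinv_0_lt_compat; lra]). lra.
  assert (0 <= h2^2/(1+y)) by (unfold Rdiv; apply Rmult_le_pos; [lra | left; apply Rinv_0_lt_compat; lra]). lra.
Qed.

Lemma rate2 : rate h1 h2 g1 g2 Cut_2 x y = G (NN2 (h1^2) (g2^2) x y) x y.
Proof.
  unfold rate. unfold G, NN2. f_equal.
  pose proof (pow2_ge_0 h1); pose proof (pow2_ge_0 g2).
  replace ((1 + g2 ^ 2) * (1 + x + h1 ^ 2) * y / ((1 + x) * (1 + y)))
   with ((1 + g2^2) * (1 + h1^2/(1+x)) / ((1+y)/y)) by (field; lra).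
  rewrite (log2_div ((1 + g2^2) * (1 + h1^2/(1+x)))), log2_mult; try lra.
  all: try apply Rdiv_lt_0_compat; try lra.
  all: try apply Rmult_lt_0_compat; try lra.
  assert (0 <= h1^2/(1+x)) by (unfold Rdiv; apply Rmult_le_pos; [lra | left; apply Rinv_0_lt_compat; lra]). lra.
  assert (0 <= h1^2/(1+x)) by (unfold Rdiv; apply Rmult_le_pos; [lra | left; apply Rinv_0_lt_compat; lra]). lra.
Qed.

Lemma rate12 : rate h1 h2 g1 g2 Cut_12 x y = G (NN12 (g1^2) (g2^2) x y) x y.
Proof.
  unfold rate. unfold G, NN12. f_equal.
  pose proof (pow2_ge_0 g1); pose proof (pow2_ge_0 g2).
  replace ((1 + g1 ^ 2 + g2^2) * x * y / ((1 + x) * (1 + y)))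
   with ((1 + g1^2 + g2^2) / ((1+x)/x) / ((1+y)/y)) by (field; lra).
  rewrite (log2_div ((1 + g1 ^ 2 + g2 ^ 2) / ((1 + x) / x))), (log2_div (1 + g1 ^ 2 + g2 ^ 2)); try lra.
  all: try apply Rdiv_lt_0_compat; try lra.
  all: apply Rdiv_lt_0_compat; lra.
Qed.
End S.

Lemma G_le N N' x y : 0 < x -> 0 < y -> 0 < N -> N <= N' -> G N x y <= G N' x y.
Proof.
  intros. unfold G.
  assert (0 < (1+x)*(1+y)) by (apply Rmult_lt_0_compat; lra).
  apply pos_le, log2_le.
  apply Rdiv_lt_0_compat; lra.
  apply frac_le; try lra. apply Rmult_le_compat_r; lra.
Qed.


Ltac pp := repeat (match goal with
  | |- 0 < _ * _ => apply Rmult_lt_0_compat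
  | |- 0 <= _ * _ => apply Rmult_le_pos
  | |- 0 < _ + _ => apply Rplus_lt_le_0_compat
  | |- 0 <= _ + _ => apply Rplus_le_le_0_compat
  end); lra.

Lemma Nmono (N : R -> R) x x' y :
  0 < x -> x <= x' -> 0 < y -> 0 < N x ->
  N x * ((1+x')*(1+y)) <= N x' * ((1+x)*(1+y)) ->
  G (N x) x y <= G (N x') x' y.
Proof.
  intros. unfold G. apply pos_le, log2_le.
  apply Rdiv_lt_0_compat; [lra|pp].
  apply frac_le; [pp|pp|auto].
Qed.

Section M.
Variables h1 h2 g1 g2 y : R.
Hypothesis hy : 0 < y.
Let a := h1^2. Let b := h2^2. Let c := g1^2. Let d := g2^2.

Lemma ha : 0 <= a. Proof. apply pow2_ge_0. Qed.
Lemma hb : 0 <= b. Proof. apply pow2_ge_0. Qed.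
Lemma hc : 0 <= c. Proof. apply pow2_ge_0. Qed.
Lemma hd : 0 <= d. Proof. apply pow2_ge_0. Qed.

Lemma inc1 x x' : 0 < x -> x <= x' -> rate h1 h2 g1 g2 Cut_1 x y <= rate h1 h2 g1 g2 Cut_1 x' y.
Proof.
  intros. rewrite !rate1 by lra.
  pose proof hb; pose proof hc.
  apply (Nmono (fun x => NN1 (h2^2) (g1^2) x y)); auto.
  unfold NN1; fold b c; pp.
  unfold NN1; fold b c.
  assert (0 <= (1+c)*(1+y+b)*(x'-x)*(1+y)) by pp. lra.
Qed.

Lemma inc12 x x' : 0 < x -> x <= x' -> rate h1 h2 g1 g2 Cut_12 x y <= rate h1 h2 g1 g2 Cut_12 x' y.
Proof.
  intros. rewrite !rate12 by lra.
  pose proof hd; pose proof hc.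
  apply (Nmono (fun x => NN12 (g1^2) (g2^2) x y)); auto.
  unfold NN12; fold c d; pp.
  unfold NN12; fold c d.
  assert (0 <= (1+c+d)*y*(x'-x)*(1+y)) by pp. lra.
Qed.

Lemma dec0 x x' : 0 < x -> x <= x' -> rate h1 h2 g1 g2 Cut_empty x' y <= rate h1 h2 g1 g2 Cut_empty x y.
Proof.
  intros. rewrite !rate0 by lra.
  pose proof ha; pose proof hb.
  unfold G. apply pos_le, log2_le.
  apply Rdiv_lt_0_compat; try unfold NN0; fold a b; pp.
  apply frac_le; [pp|pp|].
  unfold NN0; fold a b.
  assert (0 <= a*(1+y)*(1+y)*(x'-x)) by pp. lra.
Qed.

Lemma dec2 x x' : 0 < x -> x <= x' -> rate h1 h2 g1 g2 Cut_2 x' y <= rate h1 h2 g1 g2 Cut_2 x y.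
Proof.
  intros. rewrite !rate2 by lra.
  pose proof ha; pose proof hd.
  unfold G. apply pos_le, log2_le.
  apply Rdiv_lt_0_compat; try unfold NN2; fold a d; pp.
  apply frac_le; [pp|pp|].
  unfold NN2; fold a d.
  assert (0 <= (1+d)*y*a*(x'-x)*(1+y)) by pp. lra.
Qed.
End M.

Lemma minrate_le h1 h2 g1 g2 x y O : minrate h1 h2 g1 g2 x y <= rate h1 h2 g1 g2 O x y.
Proof.
  unfold minrate. destruct O.
  - eapply Rle_trans; [apply Rmin_l|apply Rmin_l].
  - eapply Rle_trans; [apply Rmin_l|apply Rmin_r].
  - eapply Rle_trans; [apply Rmin_r|apply Rmin_l].
  - eapply Rle_trans; [apply Rmin_r|apply Rmin_r].
Qed.

Lemma finish h1 h2 g1 g2 x y I J :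
  0 < x -> 0 < y ->
  (forall u u', 0 < u -> u <= u' -> rate h1 h2 g1 g2 I u y <= rate h1 h2 g1 g2 I u' y) ->
  (forall u u', 0 < u -> u <= u' -> rate h1 h2 g1 g2 J u' y <= rate h1 h2 g1 g2 J u y) ->
  rate h1 h2 g1 g2 I x y = rate h1 h2 g1 g2 J x y ->
  (forall O, rate h1 h2 g1 g2 I x y <= rate h1 h2 g1 g2 O x y) ->
  is_opt h1 h2 g1 g2 y x /\ min_cut h1 h2 g1 g2 x y I /\ min_cut h1 h2 g1 g2 x y J.
Proof.
  intros hx hy Hi Hj Heq Hmin.
  assert (Hm : minrate h1 h2 g1 g2 x y = rate h1 h2 g1 g2 I x y).
  { apply Rle_antisym. apply minrate_le.
    unfold minrate; repeat apply Rmin_glb; apply Hmin. }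
  split; [|split]; unfold min_cut; try congruence.
  split; auto. intros D hD. rewrite Hm.
  destruct (Rle_dec D x).
  - eapply Rle_trans. apply (minrate_le _ _ _ _ _ _ I). apply Hi; auto.
  - eapply Rle_trans. apply (minrate_le _ _ _ _ _ _ J). rewrite Heq. apply Hj; lra.
Qed.



Section A.
Variables a b c d x y : R.
Hypotheses (ha : 0 < a) (hb : 0 < b) (hc : 0 < c) (hd : 0 < d) (hx : 0 < x) (hy : 0 < y).
Let E := 1 + c + d.
Let K := 1 + a + b.
Let Nd := E * K + (1+d)*a*b.
Let Q := d * E * (1+a).

Lemma L12_1 : d*y <= (1+c)*(1+b) -> NN12 c d x y <= NN1 b c x y.
Proof. intros H. unfold NN12, NN1.
  assert (0 <= x * ((1+c)*(1+b) - d*y)) by (apply Rmult_le_pos; lra). lra. Qed.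

Lemma L1_12 : (1+c)*(1+b) <= d*y -> NN1 b c x y <= NN12 c d x y.
Proof. intros H. unfold NN12, NN1.
  assert (0 <= x * (d*y - (1+c)*(1+b))) by (apply Rmult_le_pos; lra). lra. Qed.

Lemma L12_2 : c*x <= (1+d)*(1+a) -> NN12 c d x y <= NN2 a d x y.
Proof. intros H. unfold NN12, NN2.
  assert (0 <= y * ((1+d)*(1+a) - c*x)) by (apply Rmult_le_pos; lra). lra. Qed.

Lemma C1eq : c*x = (1+d)*(1+a) -> NN12 c d x y = NN2 a d x y.
Proof. intros H. unfold NN12, NN2.
  assert (y*(c*x) = y*((1+d)*(1+a))) by (rewrite <- H; ring). lra. Qed.

Lemma C1le : c*x = (1+d)*(1+a) -> y * Q <= Nd -> NN2 a d x y <= NN0 a b x y.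
Proof. intros H H1. unfold NN2, NN0, Q, Nd, E, K in *.
  apply Rmult_le_reg_l with c; auto.
  assert (c*x*y = (1+d)*(1+a)*y) by (rewrite <- H; ring).
  assert (c*b*x = (1+d)*(1+a)*b) by (rewrite <- H; ring).
  assert (c*d*x*y = (1+d)*(1+a)*d*y) by (rewrite <- H; ring).
  assert (c*a*x = (1+d)*(1+a)*a) by (rewrite <- H; ring).
  assert (c*d*x = (1+d)*(1+a)*d) by (rewrite <- H; ring).
  assert (c*d*x*a = (1+d)*(1+a)*d*a) by (rewrite <- H; ring).
  assert (c*x*a*y = (1+d)*(1+a)*a*y) by (rewrite <- H; ring).
  assert (c*x*a*y*d = (1+d)*(1+a)*a*y*d) by (rewrite <- H; ring).
  nra.
Qed.

Lemma C2eq : x*((c+d)*y - (1+b)) = (1+a)*y + K -> NN12 c d x y = NN0 a b x y.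
Proof. intros H. unfold NN12, NN0, K in *. lra. Qed.

Lemma C2pos : Nd <= y * Q -> 1 + b < (c+d)*y.
Proof. intros H. unfold Q, Nd, E, K in *.
  assert (HQ : 0 < d * (1 + c + d) * (1 + a)) by pp.
  assert (H2 : (c+d)*((1 + c + d) * (1 + a + b) + (1 + d) * a * b) <= (c+d)*(y * (d * (1 + c + d) * (1 + a))))
    by (apply Rmult_le_compat_l; lra).
  assert (H3 : (1+b)*(d * (1 + c + d) * (1 + a)) < (c+d)*((1 + c + d) * (1 + a + b) + (1 + d) * a * b)).
  { assert (0 < c*c + c*c*a + c*c*b + c + c*a + c*b + c*a*b + c*d + c*d*a + c*d*b) by pp. nra. }
  assert (H4 : (1+b)*(d * (1 + c + d) * (1 + a)) < ((c+d)*y) * (d * (1 + c + d) * (1 + a))) by lra.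
  apply Rmult_lt_reg_r in H4; auto.
Qed.

Lemma C2x : Nd <= y * Q -> 0 < (c+d)*y - (1+b) ->
  x*((c+d)*y - (1+b)) = (1+a)*y + K -> c*x <= (1+d)*(1+a).
Proof. intros H HD Hx. unfold Q, Nd, E, K in *.
  apply Rmult_le_reg_r with ((c+d)*y - (1+b)); auto.
  assert (c*x*((c+d)*y - (1+b)) = c*((1+a)*y + (1+a+b))) by (rewrite <- Hx; ring).
  nra.
Qed.

Lemma C3eq : x*(c*(y+1+b)) = (1+a)*y + K -> NN1 b c x y = NN0 a b x y.
Proof. intros H. unfold NN1, NN0, K in *. lra. Qed.

Lemma C3x : x*(c*(y+1+b)) = (1+a)*y + K -> c*x <= (1+d)*(1+a).
Proof. intros Hx. unfold K in *.
  apply Rmult_le_reg_r with (y+1+b); [lra|].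
  assert (0 <= d*(1+a)*y + (1+d)*(a*b)) by pp.
  nra.
Qed.

Lemma dlt : Nd / Q < (1+c)*(1+b)/d.
Proof. unfold Q, Nd, E, K.
  apply Rmult_lt_reg_r with (d * (1 + c + d) * (1 + a)); [pp|].
  field_simplify; try lra.
  assert (0 < c*((1+a)*(1+b)*(2+c+d) - (1+a+b))).
  { apply Rmult_lt_0_compat; auto. assert (0 <= a*b) by pp. nra. }
  nra.
Qed.
End A.


Lemma lt_div N Q y : 0 < Q -> y < N/Q -> y*Q < N.
Proof. intros HQ H. apply (Rmult_lt_compat_r Q) in H; auto.
  replace (N/Q*Q) with N in H by (field; lra); auto. Qed.
Lemma le_div N Q y : 0 < Q -> N/Q <= y -> N <= y*Q.
Proof. intros HQ H. apply (Rmult_le_compat_r Q) in H; [|lra].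
  replace (N/Q*Q) with N in H by (field; lra); auto. Qed.

Ltac SD := match goal with |- is_opt _ _ _ _ _ ?X /\ _ => set (D1 := X) end.

Theorem lemma1 (h1 h2 g1 g2 : R) :
  0 < h1 -> 0 < h2 -> 0 < g1 -> 0 < g2 ->
  0 < delta1 h1 h2 g1 g2 < delta2 h1 h2 g1 g2 /\
  forall D2 : R, 0 < D2 ->
    (D2 < delta1 h1 h2 g1 g2 ->
      let D1 := (1 + g2^2) * (1 + h1^2) / g1^2 in
      is_opt h1 h2 g1 g2 D2 D1 /\
      min_cut h1 h2 g1 g2 D1 D2 Cut_12 /\ min_cut h1 h2 g1 g2 D1 D2 Cut_2) /\
    (delta1 h1 h2 g1 g2 <= D2 < delta2 h1 h2 g1 g2 ->
      let D1 := ((1 + h1^2) * D2 + (1 + h1^2 + h2^2))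
                / ((g1^2 + g2^2) * D2 - (1 + h2^2)) in
      is_opt h1 h2 g1 g2 D2 D1 /\
      min_cut h1 h2 g1 g2 D1 D2 Cut_12 /\ min_cut h1 h2 g1 g2 D1 D2 Cut_empty) /\
    (delta2 h1 h2 g1 g2 <= D2 ->
      let D1 := ((1 + h1^2) * D2 + (1 + h1^2 + h2^2))
                / (g1^2 * (D2 + (1 + h2^2))) in
      is_opt h1 h2 g1 g2 D2 D1 /\
      min_cut h1 h2 g1 g2 D1 D2 Cut_1 /\ min_cut h1 h2 g1 g2 D1 D2 Cut_empty).
Proof.
  intros Hh1 Hh2 Hg1 Hg2.
  assert (ha : 0 < h1^2) by (apply pow_lt; auto).
  assert (hb : 0 < h2^2) by (apply pow_lt; auto).
  assert (hc : 0 < g1^2) by (apply pow_lt; auto).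
  assert (hd : 0 < g2^2) by (apply pow_lt; auto).
  assert (HQ : 0 < g2^2 * (1 + g1^2 + g2^2) * (1 + h1^2)) by pp.
  assert (Hdlt := dlt (h1^2) (h2^2) (g1^2) (g2^2) ha hb hc hd).
  split.
  { unfold delta1, delta2. split; auto. apply Rdiv_lt_0_compat; auto. pp. }
  intros y hy. unfold delta1, delta2 in *.
  split; [|split].
  - intros Hy1; SD.
    pose proof (lt_div _ _ _ HQ Hy1) as Hy1'.
    assert (Hy2 : g2^2 * y <= (1 + g1^2) * (1 + h2^2)).
    { assert (y < (1 + g1^2) * (1 + h2^2) / g2^2) by lra.
      pose proof (lt_div _ _ _ hd H). lra. }
    assert (hx : 0 < D1) by (unfold D1; apply Rdiv_lt_0_compat; pp).
    assert (hx1 : g1^2 * D1 = (1 + g2^2) * (1 + h1^2)) by (unfold D1; field; lra).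
    apply finish; auto.
    + intros; apply inc12; auto.
    + intros; apply dec2; auto.
    + rewrite rate12, rate2 by auto. rewrite (C1eq (h1^2)); auto.
    + assert (HN : 0 < NN12 (g1^2) (g2^2) D1 y) by (unfold NN12; pp).
      intros O; destruct O.
      * rewrite rate12, rate0 by auto. apply G_le; auto.
        rewrite (C1eq (h1^2)) by auto. apply (C1le (h1^2) (h2^2) (g1^2)); auto. lra.
      * rewrite rate12, rate1 by auto. apply G_le; auto. apply (L12_1 (h2^2) (g1^2) (g2^2)); auto.
      * rewrite rate12, rate2 by auto. apply G_le; auto. rewrite (C1eq (h1^2)); auto; lra.
      * lra.
  - intros [Hy1 Hy2]; SD.
    pose proof (le_div _ _ _ HQ Hy1) as Hy1'.
    assert (Hy2' : g2^2 * y <= (1 + g1^2) * (1 + h2^2)).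
    { pose proof (lt_div _ _ _ hd Hy2). lra. }
    assert (HD := C2pos (h1^2) (h2^2) (g1^2) (g2^2) y ha hb hc hd Hy1').
    assert (hx : 0 < D1) by (unfold D1; apply Rdiv_lt_0_compat; [pp|lra]).
    assert (hx1 : D1 * ((g1^2 + g2^2) * y - (1 + h2^2)) = (1 + h1^2) * y + (1 + h1^2 + h2^2))
      by (unfold D1; field; lra).
    assert (HN : 0 < NN12 (g1^2) (g2^2) D1 y) by (unfold NN12; pp).
    apply finish; auto.
    + intros; apply inc12; auto.
    + intros; apply dec0; auto.
    + rewrite rate12, rate0 by auto. rewrite (C2eq (h1^2) (h2^2)); auto.
    + intros O; destruct O.
      * rewrite rate12, rate0 by auto. rewrite (C2eq (h1^2) (h2^2)); auto; lra.
      * rewrite rate12, rate1 by auto. apply G_le; auto. apply (L12_1 (h2^2) (g1^2) (g2^2)); auto.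
      * rewrite rate12, rate2 by auto. apply G_le; auto. apply (L12_2 (h1^2) (g1^2) (g2^2)); auto.
        eapply C2x; eauto. lra.
      * lra.
  - intros Hy1; SD.
    pose proof (le_div _ _ _ hd Hy1) as Hy1'.
    assert (hx : 0 < D1) by (unfold D1; apply Rdiv_lt_0_compat; pp).
    assert (hx1 : D1 * (g1^2 * (y + 1 + h2^2)) = (1 + h1^2) * y + (1 + h1^2 + h2^2))
      by (unfold D1; field; lra).
    assert (HN : 0 < NN1 (h2^2) (g1^2) D1 y) by (unfold NN1; pp).
    apply finish; auto.
    + intros; apply inc1; auto.
    + intros; apply dec0; auto.
    + rewrite rate1, rate0 by auto. rewrite (C3eq (h1^2)); auto.
    + intros O; destruct O.
      * rewrite rate1, rate0 by auto. rewrite (C3eq (h1^2)); auto; lra.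
      * lra.
      * rewrite rate1, rate2 by auto. apply G_le; auto.
        eapply Rle_trans. apply (L1_12 (h2^2) (g1^2) (g2^2)); auto; lra.
        apply (L12_2 (h1^2) (g1^2) (g2^2)); auto. apply (C3x (h1^2) (h2^2) (g1^2) (g2^2) D1 y); auto.
      * rewrite rate1, rate12 by auto. apply G_le; auto. apply (L1_12 (h2^2) (g1^2) (g2^2)); auto; lra.
Qed.
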